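(* Let $\Delta$ be a finite domain, $\mathcal{L}$ a first-order language, $R$ a binary and $A$ a unary predicate of $\mathcal{L}$, $k$ an integer with $0\le k\le|\Delta|$, $\Gamma$ a first-order sentence over $\mathcal{L}$, and $\Upsilon$ a conjunction (over $\mathcal{L}$) of constraints of the forms $\forall x\,\exists_{=c}y:\psi(x,y)$, $\exists_{=c}x\,\forall y:\psi(x,y)$ and cardinality constraints. Let $U^R$ (unary) and $B^R$ (binary) be new predicates not in $\mathcal{L}$, with all their weights equal to $1$, and let $\Omega_{\mathrm{ext}}$ be the set of possible worlds on $\Delta$ w.r.t. $\mathcal{L}$ extended by $U^R,B^R$. Define $\Phi=\Phi_1\wedge\Phi_2\wedge\Phi_3\wedge\Phi_4$ with $\Phi_1=\forall x\,\exists_{=k}y:B^R(x,y)$, $\Phi_2=(|U^R|=k)$, $\Phi_3=\forall x\forall y:(A(x)\wedge B^R(x,y))\Rightarrow U^R(y)$, $\Phi_4=\forall x\forall y:\neg A(x)\Rightarrow(R(x,y)\Leftrightarrow B^R(x,y))$. Then for all weight functions $w,\overline{w}$, $$\mathrm{WFOMC}\big(\Gamma\wedge\Upsilon\wedge(\forall x:A(x)\vee(\exists_{=k}y:R(x,y))),w,\overline{w},\Delta\big)=\binom{|\Delta|}{k}^{-1}\mathrm{WFOMC}(\Gamma\wedge\Upsilon\wedge\Phi,w,\overline{w},\Omega_{\mathrm{ext}}),$$ where the left-hand side is taken over all possible worlds on $\Delta$ w.r.t. $\mathcal{L}$.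
   Context: A possible world on $\Delta$ is a set of ground atoms over the language's predicates and $\Delta$. $N(R,\omega)$ is the number of ground atoms of $R$ true in $\omega$. For a set $\Omega$ of possible worlds, $\mathrm{WFOMC}(\Gamma,w,\overline{w},\Omega)=\sum_{\omega\in\Omega,\,\omega\models\Gamma}\prod_{R} w(R)^{N(R,\omega)}\overline{w}(R)^{|\Delta|^{\mathrm{arity}(R)}-N(R,\omega)}$, the product ranging over the predicates of the language of $\Omega$; $\mathrm{WFOMC}(\cdot,\cdot,\cdot,\Delta)$ uses all possible worlds on $\Delta$. A cardinality constraint $|S|=c$ holds iff $N(S,\omega)=c$. $\exists_{=k}y\,\psi(y)$ holds iff exactly $k$ distinct elements of $\Delta$ satisfy $\psi$. *)

(* Defs.v *)
From HB Require Import structures.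
From mathcomp Require Import all_boot all_order all_algebra.
Set Implicit Arguments. Unset Strict Implicit. Unset Printing Implicit Defensive.
Import Order.TTheory GRing.Theory Num.Theory.

Record signature := Signature { psym : finType; ar : psym -> nat }.

(* Formulas with counting quantifiers and cardinality constraints.
   Variables are de Bruijn indices: index 0 is the innermost bound variable. *)
Inductive fo_form (S : signature) : Type :=
  | FTrue
  | FAtom (p : psym S) (vs : seq nat)
  | FEq (i j : nat)
  | FNot (f : fo_form S)
  | FAnd (f g : fo_form S)
  | FOr (f g : fo_form S)
  | FExists (f : fo_form S)
  | FForall (f : fo_form S)
  | FCnt (c : nat) (f : fo_form S)
  | FCard (p : psym S) (c : nat).
Arguments FTrue {S}.
Arguments FEq {S}.

Definition FImp S (f g : fo_form S) := FOr (FNot f) g.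
Definition FIff S (f g : fo_form S) := FAnd (FImp f g) (FImp g f).

Definition gatom (S : signature) (D : finType) : finType :=
  {p : psym S & (ar p).-tuple D}.
Definition world (S : signature) (D : finType) := {set gatom S D}.

Definition Ncount S (D : finType) (w : world S D) (p : psym S) : nat :=
  #|[set t : (ar p).-tuple D | Tagged (fun q => (ar q).-tuple D) t \in w]|.

Fixpoint holds S (D : finType) (w : world S D) (e : seq D) (f : fo_form S) : bool :=
  match f with
  | FTrue => true
  | FAtom p vs => [exists t : (ar p).-tuple D,
                    (map Some (val t) == map (onth e) vs)
                    && (Tagged (fun q => (ar q).-tuple D) t \in w)]
  | FEq i j => (onth e i == onth e j) && (onth e i != None)
  | FNot g => ~~ holds w e g
  | FAnd g h => holds w e g && holds w e h
  | FOr g h => holds w e g || holds w e h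
  | FExists g => [exists d : D, holds w (d :: e) g]
  | FForall g => [forall d : D, holds w (d :: e) g]
  | FCnt c g => #|[set d : D | holds w (d :: e) g]| == c
  | FCard p c => Ncount w p == c
  end.

Fixpoint wf_bound S (n : nat) (f : fo_form S) : bool :=
  match f with
  | FTrue => true
  | FAtom p vs => (size vs == ar p) && all (fun i => i < n) vs
  | FEq i j => (i < n) && (j < n)
  | FNot g => wf_bound n g
  | FAnd g h | FOr g h => wf_bound n g && wf_bound n h
  | FExists g | FForall g | FCnt _ g => wf_bound n.+1 g
  | FCard _ _ => true
  end.

Fixpoint is_FO S (f : fo_form S) : bool :=
  match f with
  | FTrue | FAtom _ _ | FEq _ _ => true
  | FNot g | FExists g | FForall g => is_FO g
  | FAnd g h | FOr g h => is_FO g && is_FO h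
  | FCnt _ _ | FCard _ _ => false
  end.

Definition FO_sentence S (f : fo_form S) := is_FO f && wf_bound 0 f.

(* Constraints allowed in Upsilon.  In psi(x,y): y is index 0, x is index 1. *)
Inductive constr (S : signature) : Type :=
  | CForallCnt (c : nat) (psi : fo_form S)
  | CCntForall (c : nat) (psi : fo_form S)
  | CCard (p : psym S) (c : nat).

Definition constr_form S (k : constr S) : fo_form S :=
  match k with
  | CForallCnt c psi => FForall (FCnt c psi)
  | CCntForall c psi => FCnt c (FForall psi)
  | CCard p c => FCard p c
  end.

Definition constr_wf S (k : constr S) : bool :=
  match k with
  | CForallCnt _ psi | CCntForall _ psi => is_FO psi && wf_bound 2 psi
  | CCard _ _ => true
  end.

Definition Ups S (s : seq (constr S)) : fo_form S :=
  foldr (fun k f => FAnd (constr_form k) f) FTrue s.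

Definition ext (S : signature) : signature :=
  @Signature (psym S + bool)%type
    (fun q => match q with inl p => ar p | inr b => if b then 2 else 1 end).
Definition UR S : psym (ext S) := inr false.
Definition BR S : psym (ext S) := inr true.

Fixpoint lift_form S (f : fo_form S) : fo_form (ext S) :=
  match f with
  | FTrue => FTrue
  | FAtom p vs => FAtom (inl p : psym (ext S)) vs
  | FEq i j => FEq i j
  | FNot g => FNot (lift_form g)
  | FAnd g h => FAnd (lift_form g) (lift_form h)
  | FOr g h => FOr (lift_form g) (lift_form h)
  | FExists g => FExists (lift_form g)
  | FForall g => FForall (lift_form g)
  | FCnt c g => FCnt c (lift_form g)
  | FCard p c => FCard (inl p : psym (ext S)) c
  end.

Definition ext_w S (R : nzRingType) (w : psym S -> R) : psym (ext S) -> R :=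
  fun q => match q with inl p => w p | inr _ => 1%R end.

Definition WFOMC S (D : finType) (R : nzRingType) (f : fo_form S)
    (w wb : psym S -> R) : R :=
  (\sum_(om : world S D | holds om [::] f)
     \prod_(p : psym S)
        (w p ^+ Ncount om p * wb p ^+ (#|D| ^ ar p - Ncount om p)))%R.

Definition Phi S (R A : psym S) (k : nat) : fo_form (ext S) :=
  let Rx := (inl R : psym (ext S)) in
  let Ax := (inl A : psym (ext S)) in
  FAnd (FForall (FCnt k (FAtom (BR S) [:: 1; 0])))
  (FAnd (FCard (UR S) k)
  (FAnd (FForall (FForall
          (FImp (FAnd (FAtom Ax [:: 1]) (FAtom (BR S) [:: 1; 0]))
                (FAtom (UR S) [:: 0]))))
        (FForall (FForall
          (FImp (FNot (FAtom Ax [:: 1]))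
                (FIff (FAtom Rx [:: 1; 0]) (FAtom (BR S) [:: 1; 0]))))))).

Definition CondAR S (R A : psym S) (k : nat) : fo_form S :=
  FForall (FOr (FAtom A [:: 0]) (FCnt k (FAtom R [:: 1; 0]))).

(* Main.v *)
Require Import Defs.
From HB Require Import structures.
From mathcomp Require Import all_boot all_order all_algebra.
Import Order.TTheory GRing.Theory Num.Theory.
Set Implicit Arguments. Unset Strict Implicit. Unset Printing Implicit Defensive.

Definition emb (L : signature) (D : finType) (a : gatom L D) : gatom (ext L) D :=
  @Tagged (psym (ext L)) (inl (tag a)) (fun q => (ar q).-tuple D) (tagged a).

Definition res (L : signature) (D : finType) (om : world (ext L) D) : world L D :=
  [set a | emb a \in om].

Lemma Ncount_lift (L : signature) (D : finType) (om : world (ext L) D) p :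
  Ncount om (inl p : psym (ext L)) = Ncount (res om) p.
Proof. by apply: eq_card => t; rewrite !inE. Qed.

Lemma holds_lift (L : signature) (D : finType) (om : world (ext L) D) f e :
  holds om e (lift_form f) = holds (res om) e f.
Proof.
elim: f e => //= [p vs|f IH|f IHf g IHg|f IHf g IHg|f IH|f IH|c f IH|p c] e.
- by apply: eq_existsb => t; rewrite inE.
- by rewrite IH.
- by rewrite IHf IHg.
- by rewrite IHf IHg.
- by apply: eq_existsb => d; rewrite IH.
- by apply: eq_forallb => d; rewrite IH.
- by congr (_ == _); apply: eq_card => d; rewrite !inE IH.
- by rewrite Ncount_lift.
Qed.

Lemma holds_Ups_lift (L : signature) (D : finType) (om : world (ext L) D) s e :
  holds om e (lift_form (Ups s)) = holds (res om) e (Ups s).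
Proof. exact: holds_lift. Qed.

Local Open Scope ring_scope.

Definition Wt (S : signature) (D : finType) (F : nzRingType) (w wb : psym S -> F)
  (om : world S D) : F :=
  \prod_(p : psym S) (w p ^+ Ncount om p * wb p ^+ (#|D| ^ ar p - Ncount om p)).

Lemma Wt_ext (L : signature) (D : finType) (F : nzRingType) (w wb : psym L -> F)
  (om : world (ext L) D) : Wt (ext_w w) (ext_w wb) om = Wt w wb (res om).
Proof.
rewrite /Wt big_sumType /= [X in _ * X]big1 ?mulr1.
  by apply: eq_bigr => p _; rewrite Ncount_lift.
by move=> b _; rewrite !expr1n mulr1.
Qed.


Definition uat (L : signature) (D : finType) (y : D) : gatom (ext L) D :=
  @Tagged (psym (ext L)) (UR L) (fun q => (ar q).-tuple D) [tuple y].
Definition bat (L : signature) (D : finType) (x y : D) : gatom (ext L) D :=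
  @Tagged (psym (ext L)) (BR L) (fun q => (ar q).-tuple D) [tuple x; y].
Arguments uat {L D}.
Arguments bat {L D}.
Definition Ah (L : signature) (D : finType) (A : psym L) (om : world L D) (x : D) :=
  holds om [:: x] (FAtom A [:: 0]).
Definition Rh (L : signature) (D : finType) (R : psym L) (om : world L D) (x y : D) :=
  holds om [:: y; x] (FAtom R [:: 1; 0]).

Lemma tuple1E (D : Type) (t : 1.-tuple D) : t = [tuple thead t].
Proof. by apply: val_inj; case: t => [[|a [|b s]]] //. Qed.

Lemma tuple2E (D : Type) (t : 2.-tuple D) : t = [tuple tnth t ord0; tnth t ord_max].
Proof. by apply: val_inj; case: t => [[|a [|b [|c s]]]] //. Qed.

Lemma ex1 (D : finType) (P : 1.-tuple D -> bool) y :
  [exists t : 1.-tuple D, (map Some (val t) == [:: Some y]) && P t] = P [tuple y].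
Proof.
apply/existsP/idP => [[t /andP[/eqP H]]|Py]; last by exists [tuple y]; rewrite eqxx.
suff <-: t = [tuple y] by []; apply: val_inj => /=; move: H; case: t => [[|a [|b s]]] //= _ [->] //.
Qed.

Lemma ex2 (D : finType) (P : 2.-tuple D -> bool) x y :
  [exists t : 2.-tuple D, (map Some (val t) == [:: Some x; Some y]) && P t] = P [tuple x; y].
Proof.
apply/existsP/idP => [[t /andP[/eqP H]]|Py]; last by exists [tuple x; y]; rewrite eqxx.
suff <-: t = [tuple x; y] by []; apply: val_inj => /=; move: H; case: t => [[|a [|b [|c s]]]] //= _ [-> ->] //.
Qed.

Lemma Ncount_UR (L : signature) (D : finType) (om : world (ext L) D) :
  Ncount om (UR L) = #|[set y | uat y \in om]|.
Proof.
rewrite /Ncount -(card_imset _ (fun a b (H : [tuple a] = [tuple b]) => 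
   congr1 (fun t : 1.-tuple D => thead t) H)).
apply: eq_card => t; rewrite inE.
apply/idP/imsetP => [H|[y]]; last by rewrite inE => H ->.
exists (thead t); last exact: tuple1E.
by rewrite inE /uat -tuple1E.
Qed.


Lemma Phi_holds (L : signature) (D : finType) (R A : psym L) (k : nat)
  (om : world (ext L) D) :
  holds om [::] (Phi R A k) =
  [&& [forall x, #|[set y | bat x y \in om]| == k],
      #|[set y | uat y \in om]| == k,
      [forall x, [forall y, ~~ (Ah A (res om) x && (bat x y \in om)) || (uat y \in om)]] &
      [forall x, [forall y, ~~ ~~ Ah A (res om) x ||
          ((~~ Rh R (res om) x y || (bat x y \in om)) &&
           (~~ (bat x y \in om) || Rh R (res om) x y))]]].
Proof.
have hA : forall x y, holds om [:: y; x] (FAtom (inl A : psym (ext L)) [:: 1]) = Ah A (res om) x.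
  by move=> x y; rewrite /Ah -holds_lift.
have hR : forall x y, holds om [:: y; x] (FAtom (inl R : psym (ext L)) [:: 1; 0]) = Rh R (res om) x y.
  by move=> x y; rewrite /Rh -holds_lift.
have hB : forall x y, holds om [:: y; x] (FAtom (BR L) [:: 1; 0]) = (bat x y \in om).
  by move=> x y; rewrite /= ex2.
have hU : forall x y, holds om [:: y; x] (FAtom (UR L) [:: 0]) = (uat y \in om).
  by move=> x y; rewrite /= ex1.
rewrite /Phi /= -Ncount_UR.
congr [&& _, _, _ & _].
- apply: eq_forallb => x; congr (_ == _); apply: eq_card => y; by rewrite !inE -(hB x y).
- apply: eq_forallb => x; apply: eq_forallb => y; by rewrite -(hA x y) -(hB x y) -(hU x y).
- apply: eq_forallb => x; apply: eq_forallb => y; by rewrite -(hA x y) -(hB x y) -(hR x y).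
Qed.


Definition Bdef (L : signature) (D : finType) (R A : psym L) (om0 : world L D)
  (U : {set D}) (x y : D) : bool :=
  if Ah A om0 x then y \in U else Rh R om0 x y.

Definition gpred (L : signature) (D : finType) (R A : psym L) (om0 : world L D)
  (U : {set D}) (a : gatom (ext L) D) : bool :=
  let: existT q t := a in
  (match q as q0 return (ar (q0 : psym (ext L))).-tuple D -> bool with
   | inl p => fun t => @Tagged (psym L) p (fun q => (ar q).-tuple D) (t : (ar p).-tuple D) \in om0
   | inr b => if b as b0 return (ar (inr b0 : psym (ext L))).-tuple D -> bool
              then fun t => Bdef R A om0 U (tnth (t : 2.-tuple D) ord0) (tnth (t : 2.-tuple D) ord_max)
              else fun t => thead (t : 1.-tuple D) \in U
   end) t.

Definition build (L : signature) (D : finType) (R A : psym L) (om0 : world L D)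
  (U : {set D}) : world (ext L) D := [set a | gpred R A om0 U a].

Lemma res_build L D R A om0 U : res (@build L D R A om0 U) = om0.
Proof. by apply/setP => -[p t]; rewrite !inE. Qed.

Lemma uat_build L D R A om0 U y : (uat y \in @build L D R A om0 U) = (y \in U).
Proof. by rewrite inE. Qed.

Lemma bat_build L D R A om0 U x y : (bat x y \in @build L D R A om0 U) = Bdef R A om0 U x y.
Proof. by rewrite inE. Qed.

Lemma world_ext L D (om1 om2 : world (ext L) D) :
  res om1 = res om2 -> (forall y, (uat y \in om1) = (uat y \in om2)) ->
  (forall x y, (bat x y \in om1) = (bat x y \in om2)) -> om1 = om2.
Proof.
move=> hr hu hb; apply/setP => -[[p|[|]] t].
- by move/setP: hr => /(_ (Tagged (fun q => (ar q).-tuple D) (t : (ar p).-tuple D))); rewrite !inE.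
- by rewrite (tuple2E t); apply: hb.
- by rewrite (tuple1E t); apply: hu.
Qed.

Lemma Cond_holds L D R A k (om0 : world L D) :
  holds om0 [::] (CondAR R A k) = [forall x, Ah A om0 x || (#|[set y | Rh R om0 x y]| == k)].
Proof. by []. Qed.


Lemma build_inj L D R A om0 : injective (@build L D R A om0).
Proof.
move=> U1 U2 h; apply/setP => y.
by rewrite -(uat_build R A om0 U1) -(uat_build R A om0 U2) h.
Qed.

Lemma card_fiber L (D : finType) (R A : psym L) (k : nat) (om0 : world L D) :
  #|[set om | (res om == om0) && holds om [::] (Phi R A k)]| =
  if holds om0 [::] (CondAR R A k) then 'C(#|D|, k) else 0.
Proof.
case hC: (holds om0 [::] (CondAR R A k)).
- rewrite -card_draws -(card_imset _ (@build_inj L D R A om0)).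
  apply: eq_card => om; rewrite [in LHS]inE.
  apply/idP/imsetP.
  + move=> /andP[/eqP hres]; rewrite Phi_holds hres.
    move=> /and4P[/forallP h1 /eqP h2 /forallP h3 /forallP h4].
    exists [set y | uat y \in om]; first by rewrite inE h2.
    apply: world_ext => [|y|x y]; first by rewrite res_build.
      by rewrite uat_build inE.
    rewrite bat_build /Bdef.
    case hA: (Ah A om0 x).
    * have hsub : [set y | bat x y \in om] \subset [set y | uat y \in om].
        apply/subsetP => z; rewrite !inE => hz.
        by move/forallP: (h3 x) => /(_ z); rewrite hA hz.
      have : [set y | bat x y \in om] == [set y | uat y \in om].
        by rewrite eqEcard hsub h2 (eqP (h1 x)) leqnn.
      by move/eqP/setP => /(_ y); rewrite !inE.
    * move/forallP: (h4 x) => /(_ y); rewrite hA /=.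
      by case: (Rh R om0 x y); case: (bat x y \in om).
  + case=> U; rewrite inE => /eqP hU ->.
    rewrite Phi_holds res_build eqxx /=.
    apply/and4P; split.
    * apply/forallP => x; rewrite /Bdef.
      under eq_finset => y do rewrite bat_build /Bdef.
      case hA: (Ah A om0 x); first by rewrite -hU; apply/eqP; apply: eq_card => y; rewrite inE.
      move: hC; rewrite Cond_holds => /forallP /(_ x); rewrite hA /=.
      by move=> /eqP <-; apply/eqP; apply: eq_card => y; rewrite !inE.
    * by rewrite -hU; apply/eqP; apply: eq_card => y; rewrite inE uat_build.
    * apply/forallP => x; apply/forallP => y; rewrite bat_build uat_build /Bdef.
      by case: (Ah A om0 x) => //=; case: (y \in U).
    * apply/forallP => x; apply/forallP => y; rewrite bat_build /Bdef.
      by case: (Ah A om0 x) => //=; case: (Rh R om0 x y).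
- apply/eqP; rewrite cards_eq0; apply/eqP/setP => om; rewrite !inE.
  apply/negbTE/andP => -[/eqP hres]; rewrite Phi_holds.
  move=> /and4P[/forallP h1 _ _ /forallP h4].
  move: hC; rewrite -hres Cond_holds => /negbT/negP; apply.
  apply/forallP => x; case hA: (Ah A (res om) x) => //=.
  rewrite -(eqP (h1 x)); apply/eqP; apply: eq_card => y; rewrite !inE.
  move/forallP: (h4 x) => /(_ y); rewrite hA /=.
  by case: (Rh R (res om) x y); case: (bat x y \in om).
Qed.


Unset Implicit Arguments. Set Strict Implicit.

Theorem lemma4 (L : signature) (D : finType) (R A : psym L) (k : nat)
  (Gamma : fo_form L) (Upsilon : seq (constr L))
  (F : numFieldType) (w wb : psym L -> F) :
  ar R = 2%N -> ar A = 1%N -> (k <= #|D|)%N ->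
  FO_sentence Gamma -> all (@constr_wf L) Upsilon ->
  WFOMC D (FAnd Gamma (FAnd (Ups Upsilon) (CondAR R A k))) w wb =
  ('C(#|D|, k)%:R)^-1 *
  WFOMC D (FAnd (lift_form Gamma) (FAnd (lift_form (Ups Upsilon)) (Phi R A k)))
        (ext_w w) (ext_w wb).
Proof.
move=> _ _ hk _ _.
set P := fun om0 : world L D => holds om0 [::] Gamma && holds om0 [::] (Ups Upsilon).
rewrite /WFOMC.
rewrite [LHS](eq_big (fun om0 => P om0 && holds om0 [::] (CondAR R A k)) (fun om0 => Wt w wb om0)) //; last first.
  by move=> om0; exact: andbA.
rewrite [in RHS](eq_big (fun om => P (res om) && holds om [::] (Phi R A k))
                (fun om => Wt w wb (res om))); last first.
- by move=> om _; rewrite -Wt_ext.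
- by move=> om; rewrite /P /= !holds_lift andbA.
rewrite [in RHS](partition_big (@res L D) predT) //.
rewrite [in RHS](eq_bigr (fun om0 => if P om0 && holds om0 [::] (CondAR R A k)
                            then Wt w wb om0 *+ 'C(#|D|, k) else 0)); last first.
  move=> om0 _.
  rewrite (eq_big (fun om => P om0 && (om \in [set om | (res om == om0) && holds om [::] (Phi R A k)]))
                  (fun _ => Wt w wb om0)); last first.
  - by move=> om /andP[_ /eqP ->].
  - move=> om; rewrite inE; case: eqP => [->|_]; first by rewrite andbC.
    by rewrite !andbF.
  case: (P om0); rewrite ?andTb ?andFb; last by rewrite big_pred0.
  by rewrite sumr_const card_fiber; case: ifP => _; rewrite ?mulr0n.
rewrite -big_mkcondr sumrMnl -[X in _ * X]mulr_natr mulrC mulfK; last by rewrite pnatr_eq0 -lt0n bin_gt0.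
apply: eq_bigl => i; by [].
Qed.
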